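(* Let $(A,G)$ be a stable admissible pair with $A\in M_{Q_0}(\mathbb Z)$. Assume that every cluster variable of $\mathcal A(A,\mathbf u)$ can be written as a Laurent polynomial with positive coefficients in the initial cluster $\mathbf u$. Then every cluster variable of $\mathcal A(A/G,\mathbf v)$ can be written as a Laurent polynomial with positive coefficients in the initial cluster $\mathbf v$.
   Context: $Q_0$ finite, $A=(a_{ij})$ skew-symmetrizable ($DA$ skew-symmetric for a positive integer diagonal $D$). Mutation of matrices: $\mu_k(B)=(b'_{ij})$ with $b'_{ij}=-b_{ij}$ if $k\in\{i,j\}$, else $b_{ij}+\tfrac12(|b_{ik}|b_{kj}+b_{ik}|b_{kj}|)$; of seeds: $x_k$ replaced by $x'_k$ with $x_kx'_k=\prod_{b_{ik}>0}x_i^{b_{ik}}+\prod_{b_{ik}<0}x_i^{-b_{ik}}$. The cluster algebra $\mathcal A(B,\mathbf w)$ is generated over $\mathbb Z$ by the cluster variables (entries of clusters of seeds mutation-equivalent to $(B,\mathbf w)$). A permutation $g$ of $Q_0$ is an automorphism of $B$ if $b_{gi,gj}=b_{ij}$; a group $G$ of automorphisms is admissible ($(B,G)$ admissible pair) if for distinct $i,j$ in the same orbit there is no path of length $1$ or $2$ from $i$ to $j$ in the quiver of $B$ ($b_{ij}\le0$ and no $k$ with $b_{ik}>0,b_{kj}>0$). With $\overline Q_0$ the set of orbits, $(A/G)_{\mathbf i,\mathbf j}=\sum_{k\in\mathbf i}a_{k,j}$ ($j\in\mathbf j$). Orbit mutation $\mu^G_{\mathbf i}=\prod_{j\in\mathbf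 i}\mu_j$; $(A,G)$ is stable if all $(\mu^G_{\mathbf i_m}\circ\cdots\circ\mu^G_{\mathbf i_1}(A),G)$ are admissible for all finite sequences of orbits. $\mathbf u=(u_i)_{i\in Q_0}$, $\mathbf v=(v_{\mathbf i})_{\mathbf i\in\overline Q_0}$ are indeterminates. *)

(* Defs.v *)
From HB Require Import structures.
From mathcomp Require Import all_boot all_order all_algebra all_fingroup.
From mathcomp Require Import fraction.
From mathcomp Require Import mpoly.
Set Implicit Arguments. Unset Strict Implicit. Unset Printing Implicit Defensive.
Import Order.TTheory GRing.Theory Num.Theory.
Local Open Scope ring_scope.

Section ClusterDefs.
Variable I : finType.

Definition exmat := I -> I -> int.

Definition skew_symmetrizable (B : exmat) : Prop :=
  exists d : I -> nat, (forall i, (0 < d i)%N) /\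
    forall i j, (d i)%:Z * B i j = - ((d j)%:Z * B j i).

Definition mut_mx (k : I) (B : exmat) : exmat := fun i j =>
  if (i == k) || (j == k) then - B i j
  else B i j + ((`|B i k| * B k j + B i k * `|B k j|) %/ 2)%Z.

Definition ambient := {fraction {mpoly int[#|I|]}}.

Definition cluster := I -> ambient.

Definition mut_seed (k : I) (s : exmat * cluster) : exmat * cluster :=
  let: (B, x) := s in
  (mut_mx k B,
   fun i => if i == k then
       (\prod_(j | 0 < B j k) x j ^+ absz (B j k)
        + \prod_(j | B j k < 0) x j ^+ absz (B j k)) / x k
     else x i).

Definition init_cluster : cluster :=
  fun i => tofrac ('X_(enum_rank i) : {mpoly int[#|I|]}).

Definition is_cluster_variable (B : exmat) (z : ambient) : Prop :=
  exists (ks : seq I) (i : I),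
    (foldl (fun s k => mut_seed k s) (B, init_cluster) ks).2 i = z.

Definition positive_laurent (z : ambient) : Prop :=
  exists (p : {mpoly int[#|I|]}) (m : 'X_{1.. #|I|}),
    (forall m', 0 <= p@_m') /\ z * tofrac ('X_[m] : {mpoly int[#|I|]}) = tofrac p.

Definition orb (G : {group {perm I}}) (i : I) : {set I} :=
  [set j | [exists g : {perm I}, (g \in G) && (g i == j)]].

Definition orbset (G : {group {perm I}}) : {set {set I}} := [set orb G i | i : I].

Definition admissible (B : exmat) (G : {group {perm I}}) : Prop :=
  (forall g, g \in G -> forall i j, B (g i) (g j) = B i j) /\
  (forall i j, i != j -> j \in orb G i ->
     B i j <= 0 /\ ~ (exists k, 0 < B i k /\ 0 < B k j)).

Definition orbit_mut (J : {set I}) (B : exmat) : exmat :=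
  foldr mut_mx B (enum J).

End ClusterDefs.

Definition orbT (I : finType) (G : {group {perm I}}) :=
  {J : {set I} | J \in orbset G}.

Definition stable (I : finType) (B : exmat I) (G : {group {perm I}}) : Prop :=
  forall s : seq (orbT G),
    admissible (foldl (fun C (J : orbT G) => orbit_mut (val J) C) B s) G.

Definition quot_mx (I : finType) (A : exmat I) (G : {group {perm I}})
  : exmat (orbT G) := fun P Q =>
  match [pick j in val Q] with
  | Some j => \sum_(k in val P) A k j
  | None => 0
  end.

Arguments quot_mx {I} A G.

(* Main.v *)
Require Import Defs.
From mathcomp Require Import all_boot all_order all_algebra all_fingroup.
From mathcomp Require Import fraction mpoly.
From mathcomp Require Import zify ring lra.
From Stdlib Require Import FunctionalExtensionality.
Set Implicit Arguments. Unset Strict Implicit. Unset Printing Implicit Defensive.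
Import Order.TTheory GRing.Theory Num.Theory.
Local Open Scope ring_scope.

Definition pp (x : int) : int := if 0 < x then x else 0.
Definition nn (x : int) : int := if x < 0 then - x else 0.
Definition hh (x y : int) : int := pp x * pp y - nn x * nn y.

Lemma hhE (x y : int) : ((`|x| * y + x * `|y|) %/ 2)%Z = hh x y.
Proof.
suff -> : `|x| * y + x * `|y| = hh x y * 2 by rewrite mulzK.
rewrite /hh /pp /nn.
case: (ltrgtP 0 x) => hx; case: (ltrgtP 0 y) => hy; lia.
Qed.

Lemma hh_skew (di dj dk : int) (bik bki bkj bjk : int) :
  0 < di -> 0 < dj -> 0 < dk ->
  di * bik = - (dk * bki) -> dk * bkj = - (dj * bjk) ->
  di * hh bik bkj = - (dj * hh bjk bki).
Proof.
move=> pi pj pk e1 e2.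
have e3 : di * bik * bkj = - (bki * (dk * bkj)) by rewrite e1; ring.
rewrite e2 in e3.
rewrite /hh /pp /nn.
case: (ltrgtP 0 bik) => h1; case: (ltrgtP 0 bkj) => h2;
case: (ltrgtP 0 bki) => h3; case: (ltrgtP 0 bjk) => h4; nia.
Qed.

Lemma hh0l y : hh 0 y = 0. Proof. by rewrite /hh /pp /nn !ltxx !mul0r subrr. Qed.
Lemma hh0r x : hh x 0 = 0. Proof. by rewrite /hh /pp /nn !ltxx !mulr0 subrr. Qed.

Lemma pp_ge0 x : 0 <= x -> pp x = x. Proof. rewrite /pp; case: (ltrgtP 0 x); lia. Qed.
Lemma nn_ge0 x : 0 <= x -> nn x = 0. Proof. rewrite /nn; case: (ltrgtP x 0); lia. Qed.
Lemma pp_le0 x : x <= 0 -> pp x = 0. Proof. rewrite /pp; case: (ltrgtP 0 x); lia. Qed.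
Lemma nn_le0 x : x <= 0 -> nn x = - x. Proof. rewrite /nn; case: (ltrgtP x 0); lia. Qed.

Lemma coh_sum (T : finType) (S : {set T}) (f : T -> int) :
  (forall p p', p \in S -> p' \in S -> 0 < f p -> f p' < 0 -> False) ->
  pp (\sum_(p in S) f p) = \sum_(p in S) pp (f p) /\
  nn (\sum_(p in S) f p) = \sum_(p in S) nn (f p).
Proof.
move=> H.
case: (boolP [exists p in S, 0 < f p]) => [/existsP [p /andP [pS fp]]|/existsPn nE].
  have ge : forall p', p' \in S -> 0 <= f p'.
    by move=> p' p'S; rewrite leNgt; apply/negP => /(H _ _ pS p'S fp).
  have s0 : 0 <= \sum_(p in S) f p by apply: sumr_ge0.
  rewrite pp_ge0 // nn_ge0 //; split.
    by apply: eq_bigr => q qS; rewrite pp_ge0 ?ge.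
  by rewrite big1 // => q qS; rewrite nn_ge0 ?ge.
have le : forall p', p' \in S -> f p' <= 0.
  by move=> p' p'S; move: (nE p'); rewrite p'S /= leNgt.
have s0 : \sum_(p in S) f p <= 0.
  by rewrite -oppr_ge0 -sumrN; apply: sumr_ge0 => q qS; rewrite oppr_ge0 le.
rewrite pp_le0 // nn_le0 //; split.
  by rewrite big1 // => q qS; rewrite pp_le0 ?le.
by rewrite -sumrN; apply: eq_bigr => q qS; rewrite nn_le0 ?le.
Qed.

Lemma mut_mxE (T : finType) k (B : exmat T) i j : mut_mx k B i j =
  if (i == k) || (j == k) then - B i j else B i j + hh (B i k) (B k j).
Proof. by rewrite /mut_mx hhE. Qed.

Definition ep (b : int) : nat := absz (pp b).
Definition en (b : int) : nat := absz (nn b).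

Definition ex (T : finType) (B : exmat T) (x : cluster T) (k : T) : ambient T :=
  \prod_j x j ^+ ep (B j k) + \prod_j x j ^+ en (B j k).

Lemma mut_seedE (T : finType) k (B : exmat T) (x : cluster T) :
  mut_seed k (B, x) = (mut_mx k B, fun i => if i == k then ex B x k / x k else x i).
Proof.
rewrite /mut_seed /ex; congr pair.
have P1 : \prod_(j | 0 < B j k) x j ^+ `|B j k| = \prod_j x j ^+ ep (B j k).
  by rewrite big_mkcond; apply: eq_bigr => j _; rewrite /ep /pp; case: ifP.
have P2 : \prod_(j | B j k < 0) x j ^+ `|B j k| = \prod_j x j ^+ en (B j k).
  rewrite big_mkcond; apply: eq_bigr => j _; rewrite /en /nn; case: ifP => //.
  by rewrite abszN.
by rewrite P1 P2.
Qed.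

Lemma pp_nonneg x : 0 <= pp x. Proof. rewrite /pp; case: (ltrgtP 0 x); lia. Qed.
Lemma nn_nonneg x : 0 <= nn x. Proof. rewrite /nn; case: (ltrgtP x 0); lia. Qed.

Lemma sum_absz (T : finType) (S : {set T}) (g : T -> int) : (forall t, 0 <= g t) ->
  (\sum_(t in S) absz (g t))%N = absz (\sum_(t in S) g t).
Proof.
move=> g0; apply/eqP; rewrite -eqz_nat; apply/eqP.
rewrite abszE ger0_norm ?sumr_ge0 //.
apply: (big_ind2 (fun (a : nat) (b : int) => a%:Z = b)) => //.
  by move=> a1 b1 a2 b2 <- <-.
by move=> t _; rewrite abszE ger0_norm.
Qed.

Lemma sum_ep (T : finType) (S : {set T}) (f : T -> int) :
  (forall p p', p \in S -> p' \in S -> 0 < f p -> f p' < 0 -> False) ->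
  (\sum_(p in S) ep (f p))%N = ep (\sum_(p in S) f p).
Proof.
move=> H; have [c1 _] := coh_sum H; rewrite /ep c1 sum_absz // => t; exact: pp_nonneg.
Qed.

Lemma sum_en (T : finType) (S : {set T}) (f : T -> int) :
  (forall p p', p \in S -> p' \in S -> 0 < f p -> f p' < 0 -> False) ->
  (\sum_(p in S) en (f p))%N = en (\sum_(p in S) f p).
Proof.
move=> H; have [_ c2] := coh_sum H; rewrite /en c2 sum_absz // => t; exact: nn_nonneg.
Qed.

Section Comb.
Variable I : finType.
Implicit Types (B C : exmat I).


Definition skewd (d : I -> nat) B :=
  forall i j, (d i)%:Z * B i j = - ((d j)%:Z * B j i).

Lemma skewd_mut d k B : (forall i, (0 < d i)%N) -> skewd d B -> skewd d (mut_mx k B).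
Proof.
move=> dp sk i j; rewrite !mut_mxE orbC.
case: ifP => _; first by rewrite !mulrN sk.
have key : (d i)%:Z * hh (B i k) (B k j) = -((d j)%:Z * hh (B j k) (B k i)).
  by apply: (@hh_skew _ _ (d k)%:Z); rewrite ?ltz_nat ?dp //; apply: sk.
rewrite mulrDr key (sk i j) [in RHS]mulrDr opprD. done.
Qed.

Lemma skew_sign d B i j : (forall i, (0 < d i)%N) -> skewd d B ->
  B i j < 0 -> 0 < B j i.
Proof.
move=> dp sk h; have := sk i j; have := dp i; have := dp j.
rewrite -!ltz_nat; nia.
Qed.

Lemma skew_diag d B i : (forall i, (0 < d i)%N) -> skewd d B -> B i i = 0.
Proof.
move=> dp sk; have := sk i i; have := dp i; rewrite -!ltz_nat; nia.
Qed.

Variable G : {group {perm I}}.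

Lemma orb_refl i : i \in orb G i.
Proof. by rewrite inE; apply/existsP; exists 1%g; rewrite group1 perm1 eqxx. Qed.

Lemma orb_act g i : g \in G -> g i \in orb G i.
Proof. by move=> gG; rewrite inE; apply/existsP; exists g; rewrite gG eqxx. Qed.

Lemma orbP i j : reflect (exists2 g, g \in G & g i = j) (j \in orb G i).
Proof.
rewrite inE; apply: (iffP existsP) => [[g /andP [gG /eqP e]]|[g gG e]].
  by exists g. by exists g; rewrite gG e eqxx.
Qed.

Lemma orb_sym i j : j \in orb G i -> i \in orb G j.
Proof.
case/orbP=> g gG <-; apply/orbP; exists (g^-1)%g; rewrite ?groupV //.
by rewrite -permM mulgV perm1.
Qed.

Lemma orb_trans i j k : j \in orb G i -> k \in orb G j -> k \in orb G i.
Proof.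
case/orbP=> g gG <-; case/orbP=> h hG <-; apply/orbP; exists (g * h)%g; rewrite ?groupM //.
by rewrite permM.
Qed.

Lemma orb_eq i j : j \in orb G i -> orb G j = orb G i.
Proof.
move=> ji; apply/setP => k; apply/idP/idP => h.
  exact: orb_trans ji h.
exact: orb_trans (orb_sym ji) h.
Qed.

Lemma ob_proof i : orb G i \in orbset G.
Proof. by apply/imsetP; exists i. Qed.

Definition ob (i : I) : Defs.orbT G := exist _ (orb G i) (ob_proof i).

Lemma mem_ob (P : Defs.orbT G) i : (i \in val P) = (ob i == P).
Proof.
case: P => S SP; rewrite -val_eqE /=; have [p _ ->] := imsetP SP.
apply/idP/eqP => [h|<-]; last exact: orb_refl.
by rewrite (orb_eq h).
Qed.


Lemma ob_eq i j : j \in orb G i -> ob j = ob i.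
Proof. by move=> h; apply: val_inj; rewrite /= (orb_eq h). Qed.

Lemma ob_surj (P : Defs.orbT G) : exists p, ob p = P.
Proof.
case: P => S SP; have [p _ eS] := imsetP SP; exists p; apply: val_inj => /=.
by rewrite eS.
Qed.

Lemma same_orb (P : Defs.orbT G) p p' : p \in val P -> p' \in val P -> p' \in orb G p.
Proof.
rewrite !mem_ob => /eqP e1 /eqP e2.
have : val (ob p') = val (ob p) by rewrite e1 e2.
by move=> /= <-; apply: orb_refl.
Qed.

Lemma orbT_act (P : Defs.orbT G) g x : g \in G -> x \in val P -> g x \in val P.
Proof.
move=> gG; rewrite !mem_ob => /eqP <-; apply/eqP; apply: ob_eq; exact: orb_act.
Qed.

Lemma orbT_imset (P : Defs.orbT G) g : g \in G -> g @: val P = val P.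
Proof.
move=> gG; apply/eqP; rewrite eqEcard; apply/andP; split.
  by apply/subsetP => y /imsetP [x xP ->]; apply: orbT_act.
by rewrite card_imset //; apply: perm_inj.
Qed.

Definition invar B := forall g, g \in G -> forall i j, B (g i) (g j) = B i j.

Lemma sum_inv B (P : Defs.orbT G) g j : invar B -> g \in G ->
  \sum_(k in val P) B k (g j) = \sum_(k in val P) B k j.
Proof.
move=> iB gG.
rewrite -{1}(orbT_imset P gG) big_imset /=; last by move=> x y _ _; apply: perm_inj.
by apply: eq_bigr => k _; rewrite iB.
Qed.

Lemma sum_inv2 B (P : Defs.orbT G) j j' : invar B -> j' \in orb G j ->
  \sum_(k in val P) B k j' = \sum_(k in val P) B k j.
Proof. by move=> iB /orbP [g gG <-]; apply: sum_inv. Qed.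

Lemma quotE B (P Q : Defs.orbT G) q : invar B -> q \in val Q ->
  quot_mx B G P Q = \sum_(k in val P) B k q.
Proof.
move=> iB qQ; rewrite /quot_mx; case: pickP => [j jQ|/(_ q)]; last by rewrite qQ.
apply: sum_inv2 => //; exact: same_orb qQ jQ.
Qed.

Variable d : I -> nat.
Hypothesis dpos : forall i, (0 < d i)%N.

Lemma orb_zero B i j : skewd d B -> admissible B G -> j \in orb G i -> B i j = 0.
Proof.
move=> sk [_ ad] ji; have [->|ne] := eqVneq i j; first exact: skew_diag.
have [h1 _] := ad _ _ ne ji.
have ne' : j != i by rewrite eq_sym.
have [h2 _] := ad _ _ ne' (orb_sym ji).
have := sk i j; have := dpos i; have := dpos j; rewrite -!ltz_nat; nia.
Qed.

Lemma col_coh B (P : Defs.orbT G) c p p' : skewd d B -> admissible B G ->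
  p \in val P -> p' \in val P -> 0 < B p c -> B p' c < 0 -> False.
Proof.
move=> sk [_ ad] pP p'P h1 h2.
have [e|ne] := eqVneq p p'; first by move: h1; rewrite e ltNge ltW.
have h3 := skew_sign dpos sk h2.
by have [_ []] := ad _ _ ne (same_orb pP p'P); exists c.
Qed.

Lemma adm_invar B : admissible B G -> invar B.
Proof. by case. Qed.


Lemma foldr_mutE B (J : {set I}) (l : seq I) :
  (forall j j', j \in J -> j' \in J -> B j j' = 0) -> uniq l -> {subset l <= J} ->
  forall a b, foldr (@mut_mx I) B l a b = if (a \in l) || (b \in l) then - B a b
     else B a b + \sum_(j <- l) hh (B a j) (B j b).
Proof.
move=> Z; elim: l => [|k l IH] /=; first by move=> _ _ a b; rewrite big_nil addr0.
move=> /andP [kl ul] sub a b.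
have subl : {subset l <= J} by move=> x xl; apply: sub; rewrite in_cons xl orbT.
have kJ : k \in J by apply: sub; rewrite in_cons eqxx.
rewrite mut_mxE !IH // big_cons !in_cons (negbTE kl) !orbF.
have SZ1 : forall x, \sum_(j <- l) hh (B x j) (B j k) = 0.
  by move=> x; rewrite big1_seq // => j /andP [_ jl]; rewrite (Z j k) ?hh0r // subl.
have SZ2 : forall y, \sum_(j <- l) hh (B k j) (B j y) = 0.
  by move=> y; rewrite big1_seq // => j /andP [_ jl]; rewrite (Z k j) ?hh0l // subl.
have Zl : forall x y, x \in l -> y \in l -> B x y = 0.
  by move=> x y xl yl; apply: Z; apply: subl.
have Zk1 : forall x, x \in l -> B x k = 0 by move=> x xl; apply: Z => //; apply: subl.
have Zk2 : forall x, x \in l -> B k x = 0 by move=> x xl; apply: Z => //; apply: subl.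
have Zkk : B k k = 0 by rewrite Z.
case: (eqVneq a k) => [->|ak]; case: (eqVneq b k) => [->|bk] /=;
  rewrite ?SZ1 ?SZ2 ?addr0 ?(negbTE kl) ?orbF ?orbT /=.
all: case: (boolP (a \in l)) => al; case: (boolP (b \in l)) => bl /=.
all: rewrite ?Zkk ?(Zl _ _ al bl) ?(Zk1 _ al) ?(Zk2 _ bl) ?(Zk1 _ bl) ?(Zk2 _ al) ?hh0l ?hh0r ?addr0 ?oppr0 ?opprK //.
by rewrite -addrA (addrC (\sum_(j <- l) _)).
Qed.

Lemma key_sum B (P J : Defs.orbT G) q j0 : skewd d B -> admissible B G -> j0 \in val J ->
  \sum_(p in val P) \sum_(j in val J) hh (B p j) (B j q) =
  hh (\sum_(p in val P) B p j0) (\sum_(j in val J) B j q).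
Proof.
move=> sk ad j0J; rewrite exchange_big /=.
set S := \sum_(p in val P) B p j0.
have E : forall j, j \in val J -> \sum_(p in val P) hh (B p j) (B j q) =
    pp S * pp (B j q) - nn S * nn (B j q).
  move=> j jJ; rewrite /hh sumrB -!mulr_suml.
  have [c1 c2] := @coh_sum _ (val P) (fun p => B p j) (fun p p' pP p'P => @col_coh B P j p p' sk ad pP p'P).
  rewrite -c1 -c2 /S (@sum_inv2 B P j0 j (adm_invar ad)) //; exact: same_orb j0J jJ.
rewrite (eq_bigr _ E) sumrB -!mulr_sumr.
have [c1 c2] := @coh_sum _ (val J) (fun p => B p q) (fun p p' pP p'P => @col_coh B J q p p' sk ad pP p'P).
by rewrite -c1 -c2.
Qed.

Lemma orbit_mutE B (J : {set I}) : orbit_mut J B = foldr (@mut_mx I) B (enum J).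
Proof. by []. Qed.

Lemma quot_mut_pt B (J : Defs.orbT G) P Q : skewd d B -> admissible B G ->
  invar (orbit_mut (val J) B) ->
  quot_mx (orbit_mut (val J) B) G P Q = mut_mx J (quot_mx B G) P Q.
Proof.
move=> sk ad iB'; have iB := adm_invar ad.
have ZJ : forall j j', j \in val J -> j' \in val J -> B j j' = 0.
  by move=> j j' jJ j'J; apply: (orb_zero sk ad); apply: same_orb jJ j'J.
have sub : {subset enum (val J) <= val J} by move=> x; rewrite mem_enum.
have OE := foldr_mutE ZJ (enum_uniq (mem (val J))) sub.
have [q eq] := ob_surj Q; have qQ : q \in val Q by rewrite mem_ob eq.
have [j0 ej] := ob_surj J; have j0J : j0 \in val J by rewrite mem_ob ej.
rewrite (@quotE _ P Q q iB' qQ) mut_mxE (@quotE B P Q q iB qQ)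
  (@quotE B P J j0 iB j0J) (@quotE B J Q q iB qQ).
rewrite orbit_mutE.
case: (eqVneq P J) => [ePJ|nPJ] /=.
  rewrite -sumrN; apply: eq_bigr => p pP; rewrite OE.
  have -> : (p \in enum (val J)) = true by rewrite mem_enum -ePJ.
  by [].
case: (eqVneq Q J) => [eQJ|nQJ] /=.
  rewrite -sumrN; apply: eq_bigr => p pP; rewrite OE.
  have -> : (q \in enum (val J)) = true by rewrite mem_enum -eQJ.
  by rewrite orbT.
rewrite (eq_bigr (fun p => B p q + \sum_(j in val J) hh (B p j) (B j q))); last first.
  move=> p pP; rewrite OE.
  have -> : (q \in enum (val J)) = false by rewrite mem_enum mem_ob eq; apply/negbTE.
  have -> : (p \in enum (val J)) = false.
    by rewrite mem_enum mem_ob; move: pP; rewrite mem_ob => /eqP ->; apply/negbTE.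
  by rewrite big_enum.
by rewrite big_split /= (key_sum _ _ sk ad j0J).
Qed.

Lemma skewd_orbit_mut B (J : {set I}) : skewd d B -> skewd d (orbit_mut J B).
Proof.
move=> sk; rewrite orbit_mutE; elim: (enum J) => [|k l IH] //=.
exact: skewd_mut.
Qed.

Local Notation fs := (fun s k => mut_seed k s).

Lemma foldl_fst (l : seq I) C y :
  (foldl fs (C, y) l).1 = foldl (fun C k => mut_mx k C) C l.
Proof. by elim: l C y => [|k l IH] C y //=; rewrite mut_seedE IH. Qed.

Lemma block_aux B (J : {set I}) (x : cluster I) :
  (forall j j', j \in J -> j' \in J -> B j j' = 0) ->
  forall l dn C y, uniq (dn ++ l) -> {subset dn ++ l <= J} ->
  (forall i j, j \in J -> j \notin dn -> C i j = B i j) ->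
  (forall i, y i = if i \in dn then ex B x i / x i else x i) ->
  forall i, (foldl fs (C, y) l).2 i = if i \in dn ++ l then ex B x i / x i else x i.
Proof.
move=> Z; elim=> [|k l IH] dn C y U S HC Hy i; first by rewrite /= cats0 Hy.
have -> : foldl fs (C, y) (k :: l) = foldl fs (mut_seed k (C, y)) l by [].
rewrite mut_seedE.
have kJ : k \in J by apply: S; rewrite mem_cat in_cons eqxx orbT.
have kdn : k \notin dn.
  by move: U; rewrite cat_uniq => /and3P [_ /hasPn H _]; apply: H; rewrite in_cons eqxx.
have yx : forall j, B j k != 0 -> y j = x j.
  move=> j nz; have jJ : j \notin J by apply/negP => jJ; move: nz; rewrite Z ?eqxx.
  have jdn : j \notin dn by apply/negP => jdn; move: jJ; rewrite S ?mem_cat ?jdn.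
  by rewrite Hy (negbTE jdn).
have ex_eq : ex C y k = ex B x k.
  rewrite /ex; congr (_ + _); apply: eq_bigr => j _; rewrite HC //;
  (case: (eqVneq (B j k) 0) => [->|nz]; [by rewrite /ep /en /pp /nn ltxx !expr0 | by rewrite yx]).
rewrite -cat_rcons (IH (rcons dn k)) //.
- by rewrite cat_rcons.
- by move=> z; rewrite cat_rcons => /S.
- move=> a j jJ; rewrite mem_rcons in_cons negb_or => /andP [jk jdn].
  rewrite mut_mxE (negbTE jk) orbF; case: ifP => [/eqP ->|_].
    by rewrite HC // (Z k j) // oppr0.
  by rewrite !HC // (Z k j) // hh0r addr0.
- move=> a; rewrite mem_rcons in_cons; case: (eqVneq a k) => [->|ak] /=.
    by rewrite ex_eq Hy (negbTE kdn).
  by rewrite Hy.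
Qed.

Lemma block B (J : Defs.orbT G) (x : cluster I) : skewd d B -> admissible B G ->
  foldl fs (B, x) (rev (enum (val J))) =
  (orbit_mut (val J) B, fun i => if i \in val J then ex B x i / x i else x i).
Proof.
move=> sk ad.
have ZJ : forall j j', j \in val J -> j' \in val J -> B j j' = 0.
  by move=> j j' jJ j'J; apply: (orb_zero sk ad); apply: same_orb jJ j'J.
rewrite [LHS]surjective_pairing; congr pair.
  by rewrite foldl_fst foldl_rev.
apply: functional_extensionality => i.
rewrite (@block_aux B (val J) x ZJ (rev (enum (val J))) [::] B x) //=.
- by rewrite mem_rev mem_enum.
- by rewrite rev_uniq enum_uniq.
- by move=> z; rewrite mem_rev mem_enum.
Qed.

Lemma prod_fold (M : exmat I) (J : Defs.orbT G) i (E : int -> nat)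
    (y : Defs.orbT G -> ambient (Defs.orbT G)) :
  invar M -> i \in val J ->
  (forall P : Defs.orbT G, (\sum_(j in val P) E (M j i))%N = E (\sum_(j in val P) M j i)) ->
  \prod_j y (ob j) ^+ E (M j i) = \prod_P y P ^+ E (quot_mx M G P J).
Proof.
move=> iM iJ hE.
rewrite (partition_big ob predT) //=; apply: eq_bigr => P _.
rewrite (@quotE M P J i iM iJ) -hE -prodrXr.
rewrite (eq_bigl (fun j => j \in val P)); last by move=> j; rewrite mem_ob.
by apply: eq_bigr => j; rewrite mem_ob => /eqP ->.
Qed.

End Comb.

Section RelAlg.
Variables (R1 : comNzRingType) (K1 K2 : fieldType).
Variables (iota : R1 -> K1) (psi : R1 -> K2).
Hypotheses (iotaM : forall a b, iota (a * b) = iota a * iota b)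
  (iotaD : forall a b, iota (a + b) = iota a + iota b) (iota1 : iota 1 = 1)
  (iota_inj : injective iota)
  (psiM : forall a b, psi (a * b) = psi a * psi b)
  (psiD : forall a b, psi (a + b) = psi a + psi b) (psi1 : psi 1 = 1).
Variable good : R1 -> Prop.
Hypotheses (goodM : forall a b, good a -> good b -> good (a * b))
  (goodD : forall a b, good a -> good b -> good (a + b)) (good1 : good 1)
  (good_iota : forall b, good b -> iota b != 0)
  (good_psi : forall b, good b -> psi b != 0).

Definition GRep (x : K1) := exists a b, [/\ good a, good b & x * iota b = iota a].
Definition Rel (x : K1) (y : K2) :=
  forall a b, good b -> x * iota b = iota a -> y * psi b = psi a.

Lemma GRep_neq0 x : GRep x -> x != 0.
Proof.
case=> a [b [ga gb e]]; apply/eqP=> x0; move: e; rewrite x0 mul0r => /eqP.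
by rewrite eq_sym (negbTE (good_iota ga)).
Qed.

Lemma GRep_iota a : good a -> GRep (iota a).
Proof. by move=> ga; exists a, 1; rewrite iota1 mulr1. Qed.

Lemma Rel_iota a : Rel (iota a) (psi a).
Proof.
move=> a' b gb e; rewrite -psiM; congr psi; apply: iota_inj.
by rewrite iotaM.
Qed.

Lemma GRep_mul x1 x2 : GRep x1 -> GRep x2 -> GRep (x1 * x2).
Proof.
case=> a1 [b1 [g1 h1 e1]] [a2 [b2 [g2 h2 e2]]].
exists (a1 * a2), (b1 * b2); split; auto.
by rewrite !iotaM -e1 -e2; ring.
Qed.

Lemma GRep_add x1 x2 : GRep x1 -> GRep x2 -> GRep (x1 + x2).
Proof.
case=> a1 [b1 [g1 h1 e1]] [a2 [b2 [g2 h2 e2]]].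
exists (a1 * b2 + a2 * b1), (b1 * b2); split; auto.
by rewrite !iotaD !iotaM -e1 -e2; ring.
Qed.

Lemma GRep_inv x : GRep x -> GRep (x^-1).
Proof.
move=> gx; have x0 := GRep_neq0 gx; case: gx => a [b [ga gb e]].
exists b, a; split=> //.
have b0 := good_iota gb.
by rewrite -e mulKf.
Qed.

Lemma Rel_mul x1 x2 y1 y2 : GRep x1 -> GRep x2 -> Rel x1 y1 -> Rel x2 y2 ->
  Rel (x1 * x2) (y1 * y2).
Proof.
case=> a1 [b1 [g1 h1 e1]] [a2 [b2 [g2 h2 e2]]] r1 r2 a b gb e.
have f1 := r1 _ _ h1 e1; have f2 := r2 _ _ h2 e2.
have E : a * (b1 * b2) = a1 * a2 * b.
  apply: iota_inj; rewrite !iotaM -e1 -e2 -e; ring.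
have := congr1 psi E; rewrite !psiM -f1 -f2 => E2.
have nz : psi b1 * psi b2 != 0 by rewrite mulf_neq0 ?good_psi.
apply: (mulIf nz); rewrite E2; ring.
Qed.

Lemma Rel_add x1 x2 y1 y2 : GRep x1 -> GRep x2 -> Rel x1 y1 -> Rel x2 y2 ->
  Rel (x1 + x2) (y1 + y2).
Proof.
case=> a1 [b1 [g1 h1 e1]] [a2 [b2 [g2 h2 e2]]] r1 r2 a b gb e.
have f1 := r1 _ _ h1 e1; have f2 := r2 _ _ h2 e2.
have E : a * (b1 * b2) = (a1 * b2 + a2 * b1) * b.
  apply: iota_inj; rewrite !iotaM iotaD !iotaM -e1 -e2 -e; ring.
have := congr1 psi E; rewrite !psiM psiD !psiM -f1 -f2 => E2.
have nz : psi b1 * psi b2 != 0 by rewrite mulf_neq0 ?good_psi.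
apply: (mulIf nz); rewrite E2; ring.
Qed.

Lemma Rel_exist x : GRep x -> exists y, Rel x y.
Proof.
case=> a0 [b0 [g0 h0 e0]]; exists (psi a0 / psi b0) => a b gb e.
have E : a * b0 = a0 * b.
  apply: iota_inj; rewrite !iotaM -e0 -e; ring.
have := congr1 psi E; rewrite !psiM => E2.
have nz := good_psi h0.
apply: (mulIf nz); rewrite E2 mulrAC divfK //.
Qed.

Lemma Rel_fun x y y' : GRep x -> Rel x y -> Rel x y' -> y = y'.
Proof.
case=> a [b [ga gb e]] r r'; have := r _ _ gb e; have := r' _ _ gb e.
move=> <- /eqP; rewrite (can2_eq (mulfK (good_psi gb)) (divfK (good_psi gb))).
by rewrite mulfK ?good_psi // => /eqP.
Qed.

Lemma Rel_ne0 x y : GRep x -> Rel x y -> y != 0.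
Proof.
case=> a [b [ga gb e]] r; have := r _ _ gb e => E.
apply/eqP=> y0; move: E; rewrite y0 mul0r => /eqP; rewrite eq_sym.
by rewrite (negbTE (good_psi ga)).
Qed.

Lemma Rel_div N M x y x' : GRep N -> GRep x -> Rel N M -> Rel x y ->
  x' = N / x -> Rel x' (M / y).
Proof.
move=> gN gx rN rx ->.
have gx' : GRep (N / x) by apply: GRep_mul => //; apply: GRep_inv.
have [Y rY] := Rel_exist gx'.
have x0 := GRep_neq0 gx; have y0 := Rel_ne0 gx rx.
have := Rel_mul gx' gx rY rx; rewrite divfK // => rN'.
have -> : M / y = Y by rewrite (Rel_fun gN rN rN') mulfK.
done.
Qed.

Lemma GRep_exp x k : GRep x -> GRep (x ^+ k).
Proof.
move=> gx; elim: k => [|k IH]; first by rewrite expr0 -iota1; apply: GRep_iota.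
by rewrite exprS; apply: GRep_mul.
Qed.

Lemma Rel_exp x y k : GRep x -> Rel x y -> Rel (x ^+ k) (y ^+ k).
Proof.
move=> gx rx; elim: k => [|k IH]; first by rewrite !expr0 -iota1 -psi1; apply: Rel_iota.
by rewrite !exprS; apply: Rel_mul => //; apply: GRep_exp.
Qed.

Lemma RelG_prod (T : finType) (F : T -> K1) (F' : T -> K2) :
  (forall t, GRep (F t) /\ Rel (F t) (F' t)) ->
  GRep (\prod_t F t) /\ Rel (\prod_t F t) (\prod_t F' t).
Proof.
move=> H; apply: (big_ind2 (fun a b => GRep a /\ Rel a b)).
- by rewrite -iota1 -psi1; split; [apply: GRep_iota | apply: Rel_iota].
- by move=> a1 b1 a2 b2 [g1 r1] [g2 r2]; split; [apply: GRep_mul|apply: Rel_mul].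
- by move=> t _; apply: H.
Qed.

End RelAlg.

Section Spec.
Variable I : finType.
Variable G : {group {perm I}}.

Local Notation RI := {mpoly int[#|I|]}.
Local Notation RQ := {mpoly int[#|{: Defs.orbT G}|]}.

Definition sig (k : 'I_#|I|) : 'I_#|{: Defs.orbT G}| := enum_rank (ob G (enum_val k)).
Definition hX (k : 'I_#|I|) : RQ := 'X_(sig k).
Definition phi (p : RI) : RQ := mmap (@mpolyC _ int) hX p.
Definition ev (k : nat) (p : {mpoly int[k]}) : int := meval (fun _ => 1) p.
Definition goodp (k : nat) (p : {mpoly int[k]}) : Prop := 0 < ev p.

Lemma phiM a b : phi (a * b) = phi a * phi b. Proof. exact: rmorphM. Qed.
Lemma phiD a b : phi (a + b) = phi a + phi b. Proof. exact: rmorphD. Qed.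
Lemma phi1 : phi 1 = 1. Proof. exact: rmorph1. Qed.

Lemma mmap1_mono m : mmap1 hX m = 'X_[\sum_i U_(sig i) *+ m i].
Proof. by rewrite /mmap1 /hX -mprodXnE. Qed.

Lemma phiX m : phi 'X_[m] = 'X_[\sum_i U_(sig i) *+ m i].
Proof. by rewrite /phi mmapX mmap1_mono. Qed.

Lemma phiXU i : phi 'X_(enum_rank i) = 'X_(enum_rank (ob G i)).
Proof. by rewrite /phi mmapX mmap1U /hX /sig enum_rankK. Qed.

Lemma ev_mono (k : nat) (m : 'X_{1.. k}) : ev ('X_[m] : {mpoly int[k]}) = 1.
Proof. by rewrite /ev mevalX big1 // => i _; rewrite expr1n. Qed.

Lemma evE (k : nat) (p : {mpoly int[k]}) : ev p = \sum_(m <- msupp p) p@_m.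
Proof.
rewrite /ev mevalE; apply: eq_bigr => m _; rewrite big1 ?mulr1 // => i _.
by rewrite expr1n.
Qed.

Lemma ev_phi p : ev (phi p) = ev p.
Proof.
rewrite [RHS]evE /phi /mmap /ev raddf_sum /=; apply: eq_bigr => m _.
by rewrite mevalM mevalC -/(ev _) mmap1_mono ev_mono mulr1.
Qed.

Lemma goodM (k : nat) (a b : {mpoly int[k]}) : goodp a -> goodp b -> goodp (a * b).
Proof. by rewrite /goodp /ev mevalM; apply: mulr_gt0. Qed.
Lemma goodD (k : nat) (a b : {mpoly int[k]}) : goodp a -> goodp b -> goodp (a + b).
Proof. by rewrite /goodp /ev mevalD; apply: addr_gt0. Qed.
Lemma good1 (k : nat) : goodp (1 : {mpoly int[k]}).
Proof. by rewrite /goodp /ev meval1. Qed.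
Lemma good_neq0 (k : nat) (a : {mpoly int[k]}) : goodp a -> a != 0.
Proof. by rewrite /goodp; apply: contraTneq => ->; rewrite /ev meval0 ltxx. Qed.
Lemma good_mono (k : nat) (m : 'X_{1.. k}) : goodp ('X_[m] : {mpoly int[k]}).
Proof. by rewrite /goodp ev_mono. Qed.

Lemma phi_nonneg p : (forall m, 0 <= p@_m) -> forall m, 0 <= (phi p)@_m.
Proof.
move=> h m; rewrite /phi /mmap raddf_sum; apply: sumr_ge0 => m' _.
rewrite /=; by rewrite mcoeffCM mmap1_mono mcoeffX; apply: mulr_ge0 => //; apply: ler0n.
Qed.

Definition psi (p : RI) : ambient (Defs.orbT G) := tofrac (phi p).

Lemma psiM a b : psi (a * b) = psi a * psi b. Proof. by rewrite /psi phiM tofracM. Qed.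
Lemma psiD a b : psi (a + b) = psi a + psi b. Proof. by rewrite /psi phiD tofracD. Qed.
Lemma psi1 : psi 1 = 1. Proof. by rewrite /psi phi1 tofrac1. Qed.
Lemma iota_inj : injective (@tofrac RI).
Proof. by move=> a b /eqP; rewrite tofrac_eq => /eqP. Qed.
Lemma good_iota (b : RI) : goodp b -> tofrac b != 0.
Proof. by move=> gb; rewrite tofrac_eq0 good_neq0. Qed.
Lemma good_psi (b : RI) : goodp b -> psi b != 0.
Proof. by move=> gb; rewrite /psi tofrac_eq0 good_neq0 // /goodp ev_phi. Qed.

Definition GR := @GRep RI (ambient I) (@tofrac RI) (@goodp #|I|).
Definition RL := @Rel RI (ambient I) (ambient (Defs.orbT G)) (@tofrac RI) psi (@goodp #|I|).

Ltac side := first [exact: tofracM | exact: tofracD | exact: tofrac1 | exact: iota_inj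
  | exact: psiM | exact: psiD | exact: psi1 | exact: (@goodM #|I|) | exact: (@goodD #|I|)
  | exact: (@good1 #|I|) | exact: good_iota | exact: good_psi | assumption].

Lemma GR_neq0 x : GR x -> x != 0.
Proof. by move=> h; apply: GRep_neq0 h; side. Qed.
Lemma GR_iota a : goodp a -> GR (tofrac a).
Proof. by move=> h; apply: GRep_iota h; side. Qed.
Lemma RL_iota a : RL (tofrac a) (psi a).
Proof. by apply: Rel_iota; side. Qed.
Lemma GR_mul x1 x2 : GR x1 -> GR x2 -> GR (x1 * x2).
Proof. by move=> h1 h2; apply: GRep_mul h1 h2; side. Qed.
Lemma GR_add x1 x2 : GR x1 -> GR x2 -> GR (x1 + x2).
Proof. by move=> h1 h2; apply: GRep_add h1 h2; side. Qed.
Lemma GR_inv x : GR x -> GR (x^-1).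
Proof. by move=> h; apply: GRep_inv h; side. Qed.
Lemma GR_exp x k : GR x -> GR (x ^+ k).
Proof. by move=> h; apply: GRep_exp h; side. Qed.
Lemma RL_mul x1 x2 y1 y2 : GR x1 -> GR x2 -> RL x1 y1 -> RL x2 y2 -> RL (x1 * x2) (y1 * y2).
Proof. by move=> h1 h2 r1 r2; apply: Rel_mul h1 h2 r1 r2; side. Qed.
Lemma RL_add x1 x2 y1 y2 : GR x1 -> GR x2 -> RL x1 y1 -> RL x2 y2 -> RL (x1 + x2) (y1 + y2).
Proof. by move=> h1 h2 r1 r2; apply: Rel_add h1 h2 r1 r2; side. Qed.
Lemma RL_div N M x y x' : GR N -> GR x -> RL N M -> RL x y -> x' = N / x -> RL x' (M / y).
Proof. by move=> h1 h2 r1 r2 e; apply: Rel_div h1 h2 r1 r2 e; side. Qed.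
Lemma RLG_prod (T : finType) (F : T -> ambient I) (F' : T -> ambient (Defs.orbT G)) :
  (forall t, GR (F t) /\ RL (F t) (F' t)) ->
  GR (\prod_t F t) /\ RL (\prod_t F t) (\prod_t F' t).
Proof. by move=> h; apply: RelG_prod h; side. Qed.
Lemma RL_exp x y k : GR x -> RL x y -> RL (x ^+ k) (y ^+ k).
Proof. by move=> h r; apply: Rel_exp h r; side. Qed.

End Spec.

Section Main.
Variables (I : finType) (A : exmat I) (G : {group {perm I}}) (d : I -> nat).
Hypotheses (dpos : forall i, (0 < d i)%N) (skA : skewd d A) (stA : stable A G).
Local Notation fs := (fun s k => mut_seed k s).

Definition Mf (s : seq (Defs.orbT G)) :=
  foldl (fun C (J : Defs.orbT G) => orbit_mut (val J) C) A s.
Definition blocks (s : seq (Defs.orbT G)) : seq I :=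
  flatten [seq rev (enum (val J)) | J : Defs.orbT G <- s].

Lemma Mf_skew s : skewd d (Mf s).
Proof.
elim/last_ind: s => [|s J IH]; rewrite /Mf ?foldl_rcons //; exact: skewd_orbit_mut.
Qed.

Lemma Mf_adm s : admissible (Mf s) G.
Proof. exact: stA. Qed.

Lemma main_inv s :
  (foldl fs (A, @init_cluster I) (blocks s)).1 = Mf s /\
  (foldl fs (quot_mx A G, @init_cluster (Defs.orbT G)) s).1 = quot_mx (Mf s) G /\
  forall i, GR ((foldl fs (A, @init_cluster I) (blocks s)).2 i) /\
     @RL I G ((foldl fs (A, @init_cluster I) (blocks s)).2 i)
          ((foldl fs (quot_mx A G, @init_cluster (Defs.orbT G)) s).2 (ob G i)).
Proof.
elim/last_ind: s => [|s J [e1 [e2 H]]].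
  split; first by []; split; first by [].
  move=> i /=; split; first by apply: GR_iota; apply: good_mono.
  by have := @RL_iota I G ('X_(enum_rank i)); rewrite /psi phiXU.
have skM := Mf_skew s; have adM := Mf_adm s; have iM := adm_invar adM.
have adM' := Mf_adm (rcons s J).
rewrite /blocks map_rcons flatten_rcons foldl_cat -/(blocks s).
set SA := foldl fs (A, @init_cluster I) (blocks s).
set SQ := foldl fs (quot_mx A G, @init_cluster (Defs.orbT G)) s.
have -> : SA = (Mf s, SA.2) by rewrite [LHS]surjective_pairing e1.
have -> : foldl fs (quot_mx A G, @init_cluster (Defs.orbT G)) (rcons s J) = mut_seed J SQ.
  by rewrite foldl_rcons.
have -> : SQ = (quot_mx (Mf s) G, SQ.2) by rewrite [LHS]surjective_pairing e2.
rewrite (block dpos) // mut_seedE /=.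
have eM : Mf (rcons s J) = orbit_mut (val J) (Mf s) by rewrite /Mf foldl_rcons.
rewrite eM in adM' *.
split; first by [].
split.
  apply: functional_extensionality => P; apply: functional_extensionality => Q.
  by rewrite (quot_mut_pt dpos) //; apply: adm_invar.
move=> i /=.
set x := SA.2; set y := SQ.2; set M := Mf s.
case: (boolP (i \in val J)) => iJ; last first.
  have -> : (ob G i == J) = false by apply/negbTE; rewrite -mem_ob.
  exact: H.
have obJ : ob G i = J by apply/eqP; rewrite -mem_ob.
rewrite obJ eqxx.
have [gx rx] := H i; rewrite obJ in rx.
have hE1 : forall P : Defs.orbT G,
    (\sum_(j in val P) ep (M j i))%N = ep (\sum_(j in val P) M j i).
  by move=> P; apply: sum_ep => p p' pP p'P; apply: (col_coh dpos skM adM pP p'P).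
have hE2 : forall P : Defs.orbT G,
    (\sum_(j in val P) en (M j i))%N = en (\sum_(j in val P) M j i).
  by move=> P; apply: sum_en => p p' pP p'P; apply: (col_coh dpos skM adM pP p'P).
have P1 : forall j, GR (x j ^+ ep (M j i)) /\ @RL I G (x j ^+ ep (M j i)) (y (ob G j) ^+ ep (M j i)).
  by move=> j; have [g r] := H j; split; [apply: GR_exp | apply: RL_exp].
have P2 : forall j, GR (x j ^+ en (M j i)) /\ @RL I G (x j ^+ en (M j i)) (y (ob G j) ^+ en (M j i)).
  by move=> j; have [g r] := H j; split; [apply: GR_exp | apply: RL_exp].
have [g1 r1] := RLG_prod P1; have [g2 r2] := RLG_prod P2.
rewrite (prod_fold y iM iJ hE1) in r1; rewrite (prod_fold y iM iJ hE2) in r2.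
have gN : GR (ex M x i) by rewrite /ex; apply: GR_add.
have rN : @RL I G (ex M x i) (ex (quot_mx M G) y J) by rewrite /ex; apply: RL_add.
split; first by apply: GR_mul => //; apply: GR_inv.
exact: RL_div gN gx rN rx erefl.
Qed.

End Main.

Theorem mainTheorem14 (I : finType) (A : exmat I) (G : {group {perm I}}) :
  skew_symmetrizable A ->
  admissible A G ->
  stable A G ->
  (forall z, is_cluster_variable A z -> positive_laurent z) ->
  (forall z, is_cluster_variable (quot_mx A G) z -> positive_laurent z).
Proof.
move=> [d [dpos skA]] _ stA hyp z [s [P <-]].
have [p <-] := ob_surj P.
have [_ [_ H]] := main_inv dpos skA stA s.
have [_ r] := H p.
have cv : is_cluster_variable A
    ((foldl (fun s k => mut_seed k s) (A, @init_cluster I) (blocks s)).2 p).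
  by exists (blocks s), p.
have [p0 [m [nn0 e]]] := hyp _ cv.
have := r p0 'X_[m] (good_mono m) e.
rewrite /psi phiX => e'.
exists (phi G p0), (\sum_i U_(sig G i) *+ m i)%MM; split; last exact: e'.
exact: phi_nonneg.
Qed.
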